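(* Let $G$ be a compact Hausdorff group with normalized Haar measure $m_G$, and let $\Phi$ be a Young function satisfying the $\Delta_2$-condition. Let $\mathscr{F}_{\Phi,0}:L^\Phi(G)\to c_0\text{-}\bigoplus_{[\pi]\in\widehat{G}}\mathcal{B}_2(\mathcal{H}_\pi)$ be the Fourier transform $f\mapsto\widehat f$, and let $\nu_{\Phi,0}:\mathcal{B}(G)\to c_0\text{-}\bigoplus_{[\pi]\in\widehat{G}}\mathcal{B}_2(\mathcal{H}_\pi)$ be the vector measure $\nu_{\Phi,0}(A)=\widehat{\chi_A}$. Then $\nu_{\Phi,0}$ has finite variation, and its variation coincides with the Haar measure: $|\nu_{\Phi,0}|(A)=m_G(A)$ for every Borel set $A\subseteq G$.
   Context: $\mathcal{B}(G)$ is the Borel $\sigma$-algebra of $G$. A Young function is a convex $\Phi:[0,\infty]\to[0,\infty]$ with $\Phi(0)=0$ and $\lim_{x\to\infty}\Phi(x)=\infty$; it satisfies the $\Delta_2$-condition if there are $K>0$, $x_0>0$ with $\Phi(2x)\le K\Phi(x)$ for all $x\ge x_0$. $L^\Phi(G)$ is the space of (classes of) complex measurable functions $f$ with finite Luxemburg norm $\|f\|_\Phi=\inf\{k>0:\int_G\Phi(|f|/k)\,dm_G\le1\}$; it is contained in $L^1(G)$. $\widehat G$ is the set of equivalence classes of irreducible unitary representations $\pi$ of $G$ on (finite-dimensional) Hilbert spaces $\mathcal{H}_\pi$ of dimension $d_\pi$; for $f\in L^1(G)$, $\widehat f(\pi)=\int_G f(t)\pi(t)^*\,dm_G(t)$.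 $\mathcal{B}_2(\mathcal{H}_\pi)$ denotes the operators on $\mathcal{H}_\pi$, normed by the operator norm. The space $c_0\text{-}\bigoplus_{[\pi]}\mathcal{B}_2(\mathcal{H}_\pi)$ consists of families $(x_{[\pi]})$ with $x_{[\pi]}\in\mathcal{B}_2(\mathcal{H}_\pi)$ such that for every $\varepsilon>0$ only finitely many $[\pi]$ have $\|x_{[\pi]}\|\ge\varepsilon$, with norm $\sup_{[\pi]}\|x_{[\pi]}\|$. For a vector measure $\nu$ with values in a Banach space $X$, its variation is $|\nu|(A)=\sup\sum_{E\in\rho}\|\nu(E)\|$, the supremum over finite Borel partitions $\rho$ of $A$. *)

(* Defs.v *)
From HB Require Import structures.
From mathcomp Require Import all_boot all_order all_algebra.
From mathcomp Require Import all_classical all_reals all_analysis.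
From mathcomp Require Import complex.
Set Implicit Arguments. Unset Strict Implicit. Unset Printing Implicit Defensive.
Import Order.TTheory GRing.Theory Num.Theory.
Import numFieldNormedType.Exports.
Local Open Scope classical_set_scope.
Local Open Scope ring_scope.

Definition borel (G : ptopologicalType) := g_sigma_algebraType (@open G).
Definition borel_set (G : ptopologicalType) (A : set G) : Prop :=
  @measurable _ (borel G) A.

Definition compact_hausdorff_group (G : ptopologicalType)
  (mul : G -> G -> G) (inv : G -> G) (e : G) : Prop :=
  [/\ (forall x y z, mul x (mul y z) = mul (mul x y) z),
      (forall x, mul e x = x /\ mul x e = x),
      (forall x, mul (inv x) x = e /\ mul x (inv x) = e),
      continuous (fun p : G * G => mul p.1 p.2) /\ continuous inv &
      hausdorff_space G /\ compact [set: G] ].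

Definition normalized_haar (R : realType) (G : ptopologicalType)
  (mul : G -> G -> G) (m : {measure set (borel G) -> \bar R}) : Prop :=
  [/\ m setT = 1%E,
      (forall (x : G) (A : set G), borel_set A -> m [set mul x a | a in A] = m A),
      (forall A : set G, borel_set A ->
          m A = ereal_inf [set m U | U in [set U : set G | open U /\ A `<=` U]]) &
      (forall A : set G, borel_set A ->
          m A = ereal_sup [set m K | K in [set K : set G | compact K /\ K `<=` A]])].

Definition young_function (R : realType) (Phi : R -> \bar R) : Prop :=
  [/\ Phi 0 = 0%E,
      (forall x : R, 0 <= x -> (0 <= Phi x)%E),
      (forall x y t : R, 0 <= x -> 0 <= y -> 0 <= t <= 1 ->
         (Phi (t * x + (1 - t) * y)%R <= t%:E * Phi x + (1 - t)%:E * Phi y)%E) &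
      Phi x @[x --> +oo] --> +oo%E].

Definition delta2 (R : realType) (Phi : R -> \bar R) : Prop :=
  exists K x0 : R, [/\ 0 < K, 0 < x0 &
    forall x : R, x0 <= x -> (Phi (2 * x)%R <= K%:E * Phi x)%E].

Local Open Scope complex_scope.

Definition unitary_rep (R : realType) (G : ptopologicalType)
  (mul : G -> G -> G) (e : G) (d : nat) (pi : G -> 'M[R[i]]_d) : Prop :=
  [/\ pi e = 1%:M,
      (forall x y, pi (mul x y) = pi x *m pi y)%R,
      (forall x, pi x *m (map_mx conjc (pi x))^T = 1%:M)%R &
      (forall i j, continuous (fun x => complex.Re (pi x i j)) /\
                   continuous (fun x => complex.Im (pi x i j)))].

(* A subspace of column vectors C^d is encoded as the span of the
   (transposed) rows of U; pi x acts on column vectors v by v |-> pi x *m v. *)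
Definition irreducible_unitary_rep (R : realType) (G : ptopologicalType)
  (mul : G -> G -> G) (e : G) (d : nat) (pi : G -> 'M[R[i]]_d) : Prop :=
  [/\ unitary_rep mul e pi, (0 < d)%N &
      forall U : 'M[R[i]]_d,
        (forall x, (U *m (pi x)^T <= U)%MS) -> (U == (0 : 'M[R[i]]_d))%MS \/ (U == 1%:M)%MS].

(* Fourier coefficient of the indicator of A: \int_A pi(t)^* dm(t) *)
Definition fourier_ind (R : realType) (G : ptopologicalType)
  (m : {measure set (borel G) -> \bar R}) (d : nat) (pi : G -> 'M[R[i]]_d)
  (A : set G) : 'M[R[i]]_d :=
  \matrix_(i, j)
    ((Rintegral m A (fun t : borel G => complex.Re (conjc (pi t j i))))
       +i* (Rintegral m A (fun t : borel G => complex.Im (conjc (pi t j i))))).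

Definition vnorm (R : realType) (d : nat) (v : 'cV[R[i]]_d) : R :=
  Num.sqrt (\sum_(i < d) (complex.Re (v i ord0) ^+ 2 + complex.Im (v i ord0) ^+ 2))%R.

Definition opnorm (R : realType) (d : nat) (M : 'M[R[i]]_d) : \bar R :=
  ereal_sup [set (vnorm (M *m v))%:E | v in [set v : 'cV[R[i]]_d | vnorm v <= 1]]%R.

(* norm of nu(A) = hat(chi_A) in c_0-(+)_{[pi]} B_2(H_pi):
   sup over (representatives of) classes of irreducible unitary reps *)
Definition nu_norm (R : realType) (G : ptopologicalType)
  (mul : G -> G -> G) (e : G) (m : {measure set (borel G) -> \bar R})
  (A : set G) : \bar R :=
  ereal_sup [set r | exists (d : nat) (pi : G -> 'M[R[i]]_d),
     irreducible_unitary_rep mul e pi /\ r = opnorm (fourier_ind m pi A)].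

Definition nu_variation (R : realType) (G : ptopologicalType)
  (mul : G -> G -> G) (e : G) (m : {measure set (borel G) -> \bar R})
  (A : set G) : \bar R :=
  ereal_sup [set r | exists (n : nat) (E : 'I_n -> set G),
     [/\ (forall k, borel_set (E k)),
         (forall k l, k != l -> E k `&` E l = set0),
         \bigcup_(k in [set: 'I_n]) E k = A &
         r = (\sum_(k < n) nu_norm mul e m (E k))%E]].

(* Main.v *)
Require Import Defs.
From HB Require Import structures.
From mathcomp Require Import all_boot all_order all_algebra.
From mathcomp Require Import all_classical all_reals all_analysis.
From mathcomp Require Import complex measurable_realfun ring lra.
Import Order.TTheory GRing.Theory Num.Theory.
Import numFieldNormedType.Exports.
Local Open Scope classical_set_scope.
Local Open Scope ring_scope.
Set Implicit Arguments. Unset Strict Implicit.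

Lemma cont_meas (R : realType) (G : ptopologicalType) (f : G -> R) :
  continuous f -> measurable_fun [set: borel G] (f : borel G -> R).
Proof.
move=> /continuousP cf; apply: (measurability _ (RGenOpens.measurableE R)).
move=> _ [_ [a [b ->] <-]]; rewrite setTI.
apply: sub_sigma_algebra. apply: cf. exact: interval_open.
Qed.
Local Open Scope complex_scope.

Lemma ReD' (R : rcfType) (x y : R[i]) : complex.Re (x + y) = complex.Re x + complex.Re y.
Proof. by case: x; case: y. Qed.
Lemma ImD' (R : rcfType) (x y : R[i]) : complex.Im (x + y) = complex.Im x + complex.Im y.
Proof. by case: x; case: y. Qed.
Lemma ReM' (R : rcfType) (x y : R[i]) : complex.Re (x * y) = complex.Re x * complex.Re y - complex.Im x * complex.Im y.
Proof. by case: x; case: y. Qed.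
Lemma ImM' (R : rcfType) (x y : R[i]) : complex.Im (x * y) = complex.Re x * complex.Im y + complex.Im x * complex.Re y.
Proof. by case: x => a b; case: y => c d /=; rewrite addrC. Qed.
Lemma Re_sum (R : rcfType) (I : Type) (r : seq I) (F : I -> R[i]) :
  complex.Re (\sum_(i <- r) F i) = \sum_(i <- r) complex.Re (F i).
Proof. by elim/big_rec2: _ => // i y1 y2 _ <-; rewrite ReD'. Qed.
Lemma Im_sum (R : rcfType) (I : Type) (r : seq I) (F : I -> R[i]) :
  complex.Im (\sum_(i <- r) F i) = \sum_(i <- r) complex.Im (F i).
Proof. by elim/big_rec2: _ => // i y1 y2 _ <-; rewrite ImD'. Qed.
Lemma ReJ' (R : rcfType) (x : R[i]) : complex.Re (x^*) = complex.Re x.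
Proof. by case: x. Qed.
Lemma ImJ' (R : rcfType) (x : R[i]) : complex.Im (x^*) = - complex.Im x.
Proof. by case: x. Qed.

Definition Qn (R : rcfType) (d : nat) (u : 'cV[R[i]]_d) : R :=
  \sum_(i < d) (complex.Re (u i ord0) ^+ 2 + complex.Im (u i ord0) ^+ 2).

Lemma Qn_mx (R : rcfType) d (u : 'cV[R[i]]_d) :
  Qn u = complex.Re (((map_mx conjc u)^T *m u) ord0 ord0).
Proof.
rewrite mxE Re_sum; apply: eq_bigr => i _.
by rewrite !mxE ReM' ReJ' ImJ' mulNr opprK !expr2.
Qed.

Lemma Qn_unitary (R : rcfType) d (p : 'M[R[i]]_d) (v : 'cV[R[i]]_d) :
  p *m (map_mx conjc p)^T = 1%:M ->
  Qn ((map_mx conjc p)^T *m v) = Qn v.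
Proof.
move=> hp.
have E : (map_mx conjc ((map_mx conjc p)^T))^T = p.
  by apply/matrixP => i j; rewrite !mxE conjcK.
rewrite !Qn_mx map_mxM trmx_mul E.
by rewrite mulmxA -(mulmxA _ p) hp mulmx1.
Qed.

Definition Fw (R : rcfType) d (w v : 'cV[R[i]]_d) (N : 'M[R[i]]_d) : R :=
  \sum_(i < d) (complex.Re (w i ord0) * complex.Re ((N *m v) i ord0)
               + complex.Im (w i ord0) * complex.Im ((N *m v) i ord0)).

Definition alw (R : rcfType) d (w v : 'cV[R[i]]_d) (i j : 'I_d) : R :=
  complex.Re (w i ord0) * complex.Re (v j ord0) + complex.Im (w i ord0) * complex.Im (v j ord0).
Definition bew (R : rcfType) d (w v : 'cV[R[i]]_d) (i j : 'I_d) : R :=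
  complex.Im (w i ord0) * complex.Re (v j ord0) - complex.Re (w i ord0) * complex.Im (v j ord0).

Lemma Fw_exp (R : rcfType) d (w v : 'cV[R[i]]_d) (N : 'M[R[i]]_d) :
  Fw w v N = \sum_(i < d) \sum_(j < d)
     (alw w v i j * complex.Re (N i j) + bew w v i j * complex.Im (N i j)).
Proof.
rewrite /Fw; apply: eq_bigr => i _.
rewrite mxE Re_sum Im_sum !mulr_sumr -big_split; apply: eq_bigr => j _.
rewrite ReM' ImM' /alw /bew /=; ring.
Qed.

Lemma Fw_le (R : rcfType) d (w v : 'cV[R[i]]_d) (N : 'M[R[i]]_d) (l : R) :
  0 < l -> 2 * Fw w v N <= Qn w / l + l * Qn (N *m v).
Proof.
move=> l0; rewrite /Fw /Qn mulr_sumr mulr_suml mulr_sumr -big_split /=.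
apply: ler_sum => i _.
set a := complex.Re (w i ord0); set b := complex.Re ((N *m v) i ord0).
set c := complex.Im (w i ord0); set e := complex.Im ((N *m v) i ord0).
rewrite -subr_ge0.
have -> : (a ^+ 2 + c ^+ 2) / l + l * (b ^+ 2 + e ^+ 2) - 2 * (a * b + c * e)
   = ((a - l * b) ^+ 2 + (c - l * e) ^+ 2) / l.
  by field; rewrite gt_eqF.
by apply: divr_ge0; [apply: addr_ge0; apply: sqr_ge0 | apply: ltW].
Qed.

Lemma cont_int (R : realType) (G : ptopologicalType)
  (m : {measure set (borel G) -> \bar R}) (A : set G) (f : G -> R) :
  compact [set: G] -> borel_set A -> (m A < +oo)%E -> continuous f ->
  m.-integrable A (EFin \o (f : borel G -> R)).
Proof.
move=> cG mA mAoo cf; apply: measurable_bounded_integrable => //.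
  exact: measurable_funS (cont_meas cf).
have := compact_bounded (continuous_compact (continuous_subspaceT cf) cG).
move=> [M0 [M0r hM0]]; exists M0; split => // M hM x Ax.
by apply: (hM0 M hM); exists x.
Qed.

Section Rint.
Context d (T : measurableType d) (R : realType) (mu : {measure set T -> \bar R}).
Variables (D : set T) (mD : measurable D).

Definition Int (f : T -> R) := mu.-integrable D (EFin \o f).

Lemma Int_scale (c : R) f : Int f -> Int (fun t => c * f t).
Proof.
move=> hf; exact: eq_integrable (integrableZl mD c hf).
Qed.

Lemma Rint_scale (c : R) f : Int f ->
  Rintegral mu D (fun t => c * f t) = c * Rintegral mu D f.
Proof. by move=> hf; rewrite RintegralZl. Qed.

Lemma Int_add f g : Int f -> Int g -> Int (fun t => f t + g t).
Proof.
move=> hf hg; exact: eq_integrable (integrableD mD hf hg).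
Qed.

Lemma Rint_sum (I : Type) (r : seq I) (f : I -> T -> R) :
  (forall i, Int (f i)) ->
  Int (fun t => \sum_(i <- r) f i t) /\
  Rintegral mu D (fun t => \sum_(i <- r) f i t) = \sum_(i <- r) Rintegral mu D (f i).
Proof.
move=> hf; elim: r => [|a r [ih1 ih2]].
  split.
    apply: eq_integrable (integrable0 mu D) => // x _.
    by rewrite /= big_nil.
  rewrite big_nil; under eq_Rintegral do rewrite big_nil.
  by rewrite Rintegral_cst // mul0r.
have e : (fun t => \sum_(i <- a :: r) f i t) = (fun t => f a t + \sum_(i <- r) f i t).
  by apply/funext => t; rewrite big_cons.
rewrite e big_cons; split; first exact: Int_add.
rewrite RintegralD //; [congr (_ + _); exact: ih2 | exact: hf].
Qed.

End Rint.

Lemma Qn_ge0 (R : rcfType) d (u : 'cV[R[i]]_d) : 0 <= Qn u.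
Proof. by apply: sumr_ge0 => i _; apply: addr_ge0; apply: sqr_ge0. Qed.

Lemma vnormE (R : realType) d (u : 'cV[R[i]]_d) : vnorm u = Num.sqrt (Qn u).
Proof. by []. Qed.

Lemma FwM (R : rcfType) d (v : 'cV[R[i]]_d) (M : 'M[R[i]]_d) :
  Fw (M *m v) v M = Qn (M *m v).
Proof. by rewrite /Fw /Qn; apply: eq_bigr => i _; rewrite !expr2. Qed.

Lemma vnorm_bound (R : realType) (G : ptopologicalType)
  (m : {measure set (borel G) -> \bar R}) (A : set G) d (pi : G -> 'M[R[i]]_d)
  (v : 'cV[R[i]]_d) :
  compact [set: G] -> borel_set A -> (m A < +oo)%E ->
  (forall x, pi x *m (map_mx conjc (pi x))^T = 1%:M) ->
  (forall i j, continuous (fun x => complex.Re (pi x i j)) /\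
               continuous (fun x => complex.Im (pi x i j))) ->
  vnorm v <= 1 -> vnorm (fourier_ind m pi A *m v) <= fine (m A).
Proof.
move=> cG mA mAoo hU hC hv.
set M := fourier_ind m pi A; set w := M *m v; set mu := fine (m A).
have mu0 : 0 <= mu by apply: fine_ge0; apply: measure_ge0.
pose P t := (map_mx conjc (pi t))^T.
have IRe i j : Int m A (fun t => complex.Re (P t i j)).
  apply: cont_int => //.
  have -> : (fun t => complex.Re (P t i j)) = (fun t => complex.Re (pi t j i)).
    by apply/funext => t; rewrite /P !mxE ReJ'.
  exact: (hC j i).1.
have IIm i j : Int m A (fun t => complex.Im (P t i j)).
  apply: cont_int => //.
  have -> : (fun t => complex.Im (P t i j)) = (fun t => - complex.Im (pi t j i)).
    by apply/funext => t; rewrite /P !mxE ImJ'.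
  by move=> x; apply: continuousN; exact: (hC j i).2.
have Iterm i : Int m A (fun t => \sum_(j < d)
     (alw w v i j * complex.Re (P t i j) + bew w v i j * complex.Im (P t i j))).
  apply: (Rint_sum mA (index_enum (ordinal d)) (f := fun j t => alw w v i j * complex.Re (P t i j)
                                + bew w v i j * complex.Im (P t i j)) _).1.
  by move=> j; apply: (Int_add mA); apply: (Int_scale mA).
have eF : (fun t => Fw w v (P t)) = (fun t => \sum_(i < d) \sum_(j < d)
     (alw w v i j * complex.Re (P t i j) + bew w v i j * complex.Im (P t i j))).
  by apply/funext => t; rewrite Fw_exp.
have [IF RF] := Rint_sum mA (index_enum (ordinal d)) (f := fun i t => \sum_(j < d)
     (alw w v i j * complex.Re (P t i j) + bew w v i j * complex.Im (P t i j))) Iterm.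
have key : Rintegral m A (fun t => Fw w v (P t)) = Qn w.
  rewrite eF RF -FwM Fw_exp; apply: eq_bigr => i _.
  have [_ ->] := Rint_sum mA (index_enum (ordinal d)) (f := fun j t => alw w v i j * complex.Re (P t i j)
                                + bew w v i j * complex.Im (P t i j)) (fun j => Int_add mA (Int_scale mA (alw w v i j) (IRe i j)) (Int_scale mA (bew w v i j) (IIm i j))).
  apply: eq_bigr => j _.
  rewrite RintegralD //; [|exact: (Int_scale mA)|exact: (Int_scale mA)].
  rewrite !(Rint_scale mA) //; congr (_ * _ + _ * _);
    rewrite /M /fourier_ind mxE /=; apply: eq_Rintegral => t _; by rewrite /P !mxE.
have IFw : Int m A (fun t => Fw w v (P t)) by rewrite eF; exact: IF.
have hQv : Qn v <= 1.
  move: hv; rewrite vnormE => hv; have q0 := Qn_ge0 v.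
  rewrite -(sqr_sqrtr q0); apply: exprn_ile1 => //; exact: sqrtr_ge0.
case: (eqVneq (Qn w) 0) => [Q0 | Q0].
  by rewrite vnormE Q0 sqrtr0.
have Qw0 := Qn_ge0 w.
set s := Num.sqrt (Qn w).
have s0 : 0 < s by rewrite sqrtr_gt0 lt_neqAle eq_sym Q0 Qw0.
have Qs : Qn w = s * s by rewrite -expr2 sqr_sqrtr.
have ineq : 2 * Qn w <= (Qn w / s + s) * mu.
  rewrite -{1}key -(Rint_scale mA) // -(Rintegral_cst _ mA).
  apply: le_Rintegral => //.
  - exact: (Int_scale mA).
  - by apply: cont_int => //; exact: cst_continuous.
  move=> t _; apply: le_trans (Fw_le w v (P t) s0) _.
  rewrite Qn_unitary // lerD2l; rewrite -[X in _ <= X]mulr1.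
  by apply: ler_wpM2l => //; exact: ltW.
have -> : vnorm w = s by [].
have e2 : Qn w / s = s by rewrite Qs mulfK // gt_eqF.
rewrite e2 Qs in ineq.
nra.
Qed.

Lemma finA (R : realType) (G : ptopologicalType)
  (m : {measure set (borel G) -> \bar R}) (A : set G) :
  m setT = 1%E -> borel_set A -> (m A < +oo)%E.
Proof.
move=> m1 mA; apply: (le_lt_trans (y := m setT)); last by rewrite m1 ltry.
by apply: le_measure; rewrite ?inE //; exact: measurableT.
Qed.

Lemma opnorm_le (R : realType) (G : ptopologicalType)
  (m : {measure set (borel G) -> \bar R}) (A : set G) d (pi : G -> 'M[R[i]]_d) :
  compact [set: G] -> borel_set A -> (m A < +oo)%E ->
  (forall x, pi x *m (map_mx conjc (pi x))^T = 1%:M) ->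
  (forall i j, continuous (fun x => complex.Re (pi x i j)) /\
               continuous (fun x => complex.Im (pi x i j))) ->
  (opnorm (fourier_ind m pi A) <= m A)%E.
Proof.
move=> cG mA mAoo hU hC; apply: ge_ereal_sup => _ [v hv <-].
rewrite -(@fineK _ (m A)); last by rewrite ge0_fin_numE.
by rewrite lee_fin; apply: vnorm_bound.
Qed.

Lemma nu_norm_le (R : realType) (G : ptopologicalType)
  (mul : G -> G -> G) (e : G)
  (m : {measure set (borel G) -> \bar R}) (A : set G) :
  compact [set: G] -> borel_set A -> (m A < +oo)%E ->
  (nu_norm mul e m A <= m A)%E.
Proof.
move=> cG mA mAoo; apply: ge_ereal_sup => _ [d [pi [[[_ _ hU hC] _ _] ->]]].
exact: opnorm_le.
Qed.

Lemma nu_norm_ge (R : realType) (G : ptopologicalType)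
  (mul : G -> G -> G) (e : G)
  (m : {measure set (borel G) -> \bar R}) (A : set G) :
  borel_set A -> (m A < +oo)%E ->
  (m A <= nu_norm mul e m A)%E.
Proof.
move=> mA mAoo.
pose pi1 : G -> 'M[R[i]]_1 := fun _ => 1%:M.
have irr : irreducible_unitary_rep mul e pi1.
  split => //.
  - split => //.
    + by move=> x y; rewrite /pi1 mul1mx.
    + by move=> x; rewrite /pi1 map_scalar_mx rmorph1 tr_scalar_mx mul1mx.
    + by move=> i j; split; apply: cst_continuous.
  - move=> U _; case: (eqVneq U 0) => [->|U0].
      by left; apply/andP; split; apply: submx_refl.
    right; apply/andP; split; first exact: submx1.
    rewrite sub1mx /row_full; apply/eqP.
    have := rank_leq_row U; have : \rank U != 0%N by rewrite mxrank_eq0.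
    by case: (\rank U) => [|[|]].
apply: (le_trans _ (ereal_sup_ubound _)); last first.
  by exists 1%N, pi1; split; first exact: irr.
apply: (le_trans _ (ereal_sup_ubound _)); last first.
  exists 1%:M; last reflexivity.
  rewrite /= vnormE /Qn big_ord1 mxE eqxx /=.
  by rewrite expr1n expr0n /= addr0 sqrtr1.
rewrite mulmx1 vnormE /Qn big_ord1 /fourier_ind mxE /=.
rewrite [X in X ^+ 2 + _](_ : _ = fine (m A)); last first.
  rewrite -[RHS]mul1r -(Rintegral_cst _ mA).
  by apply: eq_Rintegral => t _; rewrite /pi1 mxE eqxx.
rewrite [X in _ + X ^+ 2](_ : _ = 0); last first.
  rewrite -[RHS](mul0r (fine (m A))) -(Rintegral_cst _ mA).
  by apply: eq_Rintegral => t _; rewrite /pi1 mxE eqxx /= oppr0.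
rewrite [_ + _](_ : _ = fine (m A) ^+ 2); last by ring.
rewrite sqrtr_sqr ger0_norm; last by apply: fine_ge0; apply: measure_ge0.
by rewrite fineK // ge0_fin_numE.
Qed.

Lemma nu_norm_eq (R : realType) (G : ptopologicalType)
  (mul : G -> G -> G) (e : G)
  (m : {measure set (borel G) -> \bar R}) (A : set G) :
  compact [set: G] -> m setT = 1%E -> borel_set A ->
  nu_norm mul e m A = m A.
Proof.
move=> cG m1 mA; have mAoo := finA m1 mA.
by apply/eqP; rewrite eq_le nu_norm_le // nu_norm_ge.
Qed.

Lemma fsum_ord (R : realType) n (f : 'I_n -> \bar R) :
  (\sum_(i \in [set: 'I_n]) f i = \sum_(i < n) f i)%E.
Proof.
rewrite (fsbigE (index_enum 'I_n)) //.
- by apply: eq_bigl => i; rewrite in_setT.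
- exact: index_enum_uniq.
- by move=> i _; rewrite mem_index_enum.
Qed.

Lemma var_eq (R : realType) (G : ptopologicalType)
  (mul : G -> G -> G) (e : G)
  (m : {measure set (borel G) -> \bar R}) (A : set G) :
  compact [set: G] -> m setT = 1%E -> borel_set A ->
  nu_variation mul e m A = m A.
Proof.
move=> cG m1 mA; apply/eqP; rewrite eq_le; apply/andP; split.
- apply: ge_ereal_sup => _ [n [E [hE hdisj hU ->]]].
  have -> : (\sum_(k < n) nu_norm mul e m (E k) = \sum_(k < n) m (E k))%E.
    by apply: eq_bigr => k _; apply: nu_norm_eq.
  rewrite -hU measure_fin_bigcup //.
  + by rewrite fsum_ord.
  + exact: finite_finset.
  + move=> i j _ _ [x [Ei Ej]]; apply/eqP; apply: contraT => /hdisj h.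
    have : (E i `&` E j) x by split.
    by rewrite h.
  + by move=> i _; exact: hE.
- apply: ereal_sup_ubound; exists 1%N, (fun _ => A); split => //.
  + by move=> k l; rewrite (ord1 k) (ord1 l) eqxx.
  + apply/seteqP; split => [x [k _ Ax] // | x Ax]; by exists ord0.
  + by rewrite big_ord1 nu_norm_eq.
Qed.

Unset Implicit Arguments.

Theorem lemma3p1 (R : realType) (G : ptopologicalType)
  (mul : G -> G -> G) (inv : G -> G) (e : G)
  (m : {measure set (borel G) -> \bar R}) (Phi : R -> \bar R) :
  compact_hausdorff_group mul inv e ->
  normalized_haar mul m ->
  young_function Phi -> delta2 Phi ->
  (nu_variation mul e m setT < +oo)%E /\
  (forall A : set G, borel_set A -> nu_variation mul e m A = m A).
Proof.
move=> [_ _ _ _ [_ cG]] [m1 _ _ _] _ _.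
have hv : forall A : set G, borel_set A -> nu_variation mul e m A = m A.
  by move=> A mA; apply: var_eq.
split => //.
by rewrite hv ?m1 ?ltry //; exact: measurableT.
Qed.
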